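(* Let $G=(V,E)$ be a connected graph, let $\mathcal{B}$ be the set of blocks of $G$ which are not cut edges of pendant paths of $G$, and let $\mu(v)$ denote the number of blocks containing the vertex $v$. Then $$Z_c(G)\geq\sum_{B\in\mathcal{B}}\delta(G[B])-\sum_{p\in R_2\cup R_3}(\mu(p)-1),$$ where $R_2=\{v\in V:\kappa(G-v)=2,\ p(v)=0\}$ and $R_3=\{v\in V:\kappa(G-v)\geq 3\}$.
   Context: A block is a maximal subgraph with no articulation point. $\kappa(H)$ is the number of connected components of $H$; $\delta(H)$ is the minimum degree of $H$. A pendant path attached to a vertex $v$ is a set $P\subset V$ such that $G[P]$ is a path component of $G-v$, one of whose ends is adjacent to $v$ in $G$; $p(v)$ is the number of pendant paths attached to $v$; a cut edge of a pendant path is an edge of the path $G[P\cup\{v\}]$. Zero forcing: given a set $S$ of initially colored vertices, if a colored vertex $u$ has exactly one uncolored neighbor $w$, then $w$ becomes colored; $S$ is a zero forcing set if repeated application colors all vertices. $Z_c(G)$ is the minimum size of a zero forcing set $S$ with $G[S]$ connected. *)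

(* Defs.v *)
(* Simple graph on a finType T given by a symmetric,
   irreflexive relation e. All vertex subsets are {set T}. *)
From mathcomp Require Import all_boot.
Set Implicit Arguments. Unset Strict Implicit. Unset Printing Implicit Defensive.

Section Graph.
Variables (T : finType) (e : rel T).

Definition rel_in (C : {set T}) : rel T :=
  [rel x y | [&& e x y, x \in C & y \in C]].

(* G[C] is connected (the empty graph counts as connected) *)
Definition connected_in (C : {set T}) : bool :=
  [forall x in C, forall y in C, connect (rel_in C) x y].

Definition component_of (S C : {set T}) : bool :=
  [&& C \subset S, C != set0, connected_in C &
      [forall x in C, forall y in S, e x y ==> (y \in C)]].

Definition kappa_del (v : T) : nat :=
  #|[set C : {set T} | component_of (~: [set v]) C]|.

Definition deg_in (C : {set T}) (x : T) : nat := #|[set y in C | e x y]|.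

Definition mindeg (C : {set T}) : nat := \big[minn/#|T|]_(x in C) deg_in C x.

Definition nocut (C : {set T}) : bool :=
  connected_in C && [forall v in C, connected_in (C :\ v)].

(* a block: maximal (nonempty) vertex set inducing a connected subgraph
   without articulation point (blocks are induced subgraphs) *)
Definition block (B : {set T}) : bool :=
  [&& B != set0, nocut B &
      [forall B' : {set T}, (B \subset B') && nocut B' ==> (B' == B)]].

Definition mu (v : T) : nat := #|[set B : {set T} | block B & v \in B]|.

(* G[P] is a path: nonempty, connected, max degree <= 2, not a cycle *)
Definition is_path (P : {set T}) : bool :=
  [&& P != set0, connected_in P,
      [forall x in P, deg_in P x <= 2] &
      [exists x in P, deg_in P x <= 1]].

Definition path_end (P : {set T}) (x : T) : bool := (x \in P) && (deg_in P x <= 1).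

(* P is a pendant path attached to v: G[P] is a path component of G - v,
   and v is adjacent to an end of it (and to no other vertex of P, so
   that G[P u {v}] is a path) *)
Definition pendant (v : T) (P : {set T}) : bool :=
  [&& component_of (~: [set v]) P, is_path P &
      [exists x, path_end P x && ([set y in P | e v y] == [set x])]].

Definition npend (v : T) : nat := #|[set P : {set T} | pendant v P]|.

Definition pendant_cut_edge (B : {set T}) : bool :=
  [exists v, exists P : {set T}, exists x, exists y,
     [&& pendant v P, e x y, x \in v |: P, y \in v |: P & B == [set x; y]]].

Definition blocksB : {set {set T}} :=
  [set B : {set T} | block B & ~~ pendant_cut_edge B].

Definition force_step (S : {set T}) : {set T} :=
  S :|: [set w | [exists u in S, (e u w) && (w \notin S) &&
                    [forall y, (e u y && (y \notin S)) ==> (y == w)]]].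

(* the final coloring: forcing can never add more than #|T| vertices *)
Definition zf_closure (S : {set T}) : {set T} := iter #|T| force_step S.

Definition zero_forcing (S : {set T}) : bool := zf_closure S == setT.

Definition Zc : nat :=
  \big[minn/#|T|]_(S in [set S : {set T} | connected_in S & zero_forcing S]) #|S|.

Definition R2 : {set T} := [set v | (kappa_del v == 2) && (npend v == 0)].
Definition R3 : {set T} := [set v | 3 <= kappa_del v].

End Graph.

(* Main.v *)
Require Import Defs.
From mathcomp Require Import all_boot all_order all_algebra zify.
Set Implicit Arguments. Unset Strict Implicit. Unset Printing Implicit Defensive.

Section Aux.
Variables (T : finType) (e : rel T).
Hypothesis e_sym : symmetric e.
Hypothesis e_irr : irreflexive e.
Implicit Types (A B C D X : {set T}) (x y z u v w : T).

Lemma rel_in_sym C : symmetric (rel_in e C).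
Proof.
move=> x y; rewrite /rel_in /= e_sym.
by case: (x \in C); case: (y \in C); rewrite ?andbF ?andbT.
Qed.

Lemma conn_sym C x y : connect (rel_in e C) x y = connect (rel_in e C) y x.
Proof. exact: (sym_connect_sym (rel_in_sym C)). Qed.

Lemma conn_mono C D x y : C \subset D ->
  connect (rel_in e C) x y -> connect (rel_in e D) x y.
Proof.
move=> sCD; apply: connect_sub => a b /= /and3P [h ha hb].
by apply: connect1; rewrite /rel_in /= h (subsetP sCD _ ha) (subsetP sCD _ hb).
Qed.

Lemma conn_in_r C x y : connect (rel_in e C) x y -> y = x \/ y \in C.
Proof.
case/connectP => p; case/lastP: p => [|p z] /=; first by move=> _ ->; left.
rewrite rcons_path last_rcons => /andP [_ /and3P [_ _ hz]] ->; by right.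
Qed.

Lemma conn_in_l C x y : connect (rel_in e C) x y -> x = y \/ x \in C.
Proof.
rewrite conn_sym => /conn_in_r [->|]; by [left|right].
Qed.

Lemma conn_first C x y : connect (rel_in e C) x y -> x != y ->
  exists z, [&& e x z, x \in C & z \in C].
Proof.
case/connectP => [[|z p]] /=; first by move=> _ ->; rewrite eqxx.
by case/andP => h _ _ _; exists z.
Qed.

Lemma connectedP C :
  reflect (forall x y, x \in C -> y \in C -> connect (rel_in e C) x y)
          (connected_in e C).
Proof.
apply: (iffP idP).
  by move=> /forall_inP H x y hx hy; move/forall_inP: (H x hx); apply.
by move=> H; apply/forall_inP => x hx; apply/forall_inP => y hy; apply: H.
Qed.

Lemma connected_U A B z : connected_in e A -> connected_in e B ->
  z \in A -> z \in B -> connected_in e (A :|: B).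
Proof.
move=> /connectedP cA /connectedP cB zA zB; apply/connectedP.
have sA : A \subset A :|: B by apply: subsetUl.
have sB : B \subset A :|: B by apply: subsetUr.
have H x : x \in A :|: B -> connect (rel_in e (A :|: B)) x z.
  by case/setUP => hx; [apply: conn_mono sA _; apply: cA|apply: conn_mono sB _; apply: cB].
move=> x y hx hy; apply: connect_trans (H x hx) _; rewrite conn_sym; exact: H.
Qed.

Lemma connected_le1 C : #|C| <= 1 -> connected_in e C.
Proof.
move=> h; apply/connectedP => x y hx hy.
suff -> : y = x by apply: connect0.
apply/eqP; apply: contraLR h => nxy; rewrite -ltnNge; apply/card_gt1P.
by exists x, y; rewrite hx hy eq_sym.
Qed.

Lemma nocutP C : reflect (connected_in e C /\ forall v, connected_in e (C :\ v)) (nocut e C).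
Proof.
apply: (iffP andP) => [[h /forall_inP H]|[h H]]; split => //.
  move=> v; case: (boolP (v \in C)) => vC; first exact: H.
  suff -> : C :\ v = C by [].
  by apply/setP => x; rewrite !inE; case: eqP => // ->; rewrite (negbTE vC).
by apply/forall_inP => v _; apply: H.
Qed.

Lemma nocut_U A B : nocut e A -> nocut e B -> 1 < #|A :&: B| -> nocut e (A :|: B).
Proof.
move=> /nocutP [cA dA] /nocutP [cB dB] /card_gt1P [x [y [hx hy nxy]]].
case/setIP: hx => xA xB; case/setIP: hy => yA yB.
apply/nocutP; split; first exact: connected_U cA cB xA xB.
move=> v; rewrite setDUl.
case: (eqVneq x v) => [exv|nxv].
  apply: (connected_U (z := y)) (dA v) (dB v) _ _; rewrite !inE ?yA ?yB andbT;
  by rewrite -exv eq_sym.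
apply: (connected_U (z := x)) (dA v) (dB v) _ _; rewrite !inE ?xA ?xB andbT //.
Qed.

Lemma nocut_edge x y : e x y -> nocut e [set x; y].
Proof.
move=> exy.
have cxy : connected_in e [set x; y].
  apply/connectedP => a b ha hb.
  have H z : z \in [set x; y] -> connect (rel_in e [set x; y]) x z.
    case/set2P => ->; first exact: connect0.
    by apply: connect1; rewrite /rel_in /= exy !inE !eqxx orbT.
  by apply: connect_trans (H b hb); rewrite conn_sym; apply: H.
apply/nocutP; split => // v.
case: (boolP (v \in [set x; y])) => hv.
  apply: connected_le1.
  have: #|[set x; y]| <= 2 by rewrite cards2; case: (x != y).
  by rewrite (cardsD1 v) hv add1n ltnS.
rewrite (_ : _ :\ v = [set x; y]) //; apply/setP => z; rewrite !inE.
by case: (eqVneq z v) => // ->; move: hv; rewrite !inE => /negbTE ->.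
Qed.

Lemma nocut1 x : nocut e [set x].
Proof.
apply/nocutP; split => [|v]; apply: connected_le1; first by rewrite cards1.
by apply: leq_trans (subset_leq_card (subsetDl _ _)) _; rewrite cards1.
Qed.

Lemma blockP B : block e B ->
  [/\ B != set0, nocut e B & forall B', nocut e B' -> B \subset B' -> B' = B].
Proof.
case/and3P => h1 h2 /forallP h3; split => // B' n1 s1.
by apply/eqP; move: (h3 B'); rewrite s1 n1.
Qed.

Lemma block_ex X : nocut e X -> X != set0 -> exists2 B, block e B & X \subset B.
Proof.
move=> nX X0; case: (maxset_exists (P := nocut e) nX) => B /maxsetP [nB mB] sXB.
exists B => //; apply/and3P; split => //.
  by apply: contraNneq X0 => B0; move: sXB; rewrite B0 subset0.
by apply/forallP => B'; apply/implyP => /andP [s1 n1]; rewrite (mB _ n1 s1).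
Qed.

Lemma block_eq2 B1 B2 : block e B1 -> block e B2 -> 1 < #|B1 :&: B2| -> B1 = B2.
Proof.
move=> b1 b2 h; case/blockP: (b1) => _ n1 m1; case/blockP: (b2) => _ n2 m2.
have nU := nocut_U n1 n2 h.
by rewrite -(m1 _ nU (subsetUl _ _)) (m2 _ nU (subsetUr _ _)).
Qed.

Lemma block_edge x y : e x y -> exists2 B, block e B & (x \in B) && (y \in B).
Proof.
move=> exy; case: (block_ex (nocut_edge exy)) => [|B bB sB].
  by apply/set0Pn; exists x; rewrite !inE eqxx.
by exists B => //; rewrite !(subsetP sB) // !inE eqxx ?orbT.
Qed.

Lemma block_of x : exists2 B, block e B & x \in B.
Proof.
case: (block_ex (nocut1 x)) => [|B bB sB]; first by apply/set0Pn; exists x; rewrite inE.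
by exists B => //; apply: (subsetP sB); rewrite inE.
Qed.

Lemma block_card2 B x y : block e B -> x \in B -> e x y -> 1 < #|B|.
Proof.
move=> bB xB exy; rewrite ltnNge; apply/negP => h.
case/blockP: bB => _ _ m.
have sB : B \subset [set x; y].
  apply/subsetP => z zB; rewrite !inE; apply/orP; left; apply/eqP.
  apply/eqP; apply: contraLR h => nzx; rewrite -ltnNge; apply/card_gt1P.
  by exists z, x.
have := m _ (nocut_edge exy) sB => E.
have : y \in B by rewrite -E !inE eqxx orbT.
move=> yB; have nxy : x != y by apply: contraTneq exy => ->; rewrite e_irr.
have : 1 < #|B| by apply/card_gt1P; exists x, y.
by rewrite ltnNge h.
Qed.

Lemma has_nb x y : connected_in e setT -> x != y -> exists z, e x z.
Proof.
move=> /connectedP G nxy; case: (conn_first (G x y (in_setT _) (in_setT _)) nxy) => z.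
by case/and3P => h _ _; exists z.
Qed.

Lemma deg_nb C x y : connected_in e C -> x \in C -> y \in C -> x != y ->
  exists z, (e x z) && (z \in C).
Proof.
move=> /connectedP cC xC yC nxy; case: (conn_first (cC x y xC yC) nxy) => z.
by case/and3P => h _ zC; exists z; rewrite h zC.
Qed.

Lemma sorted_conn D s : sorted e s -> {subset s <= D} ->
  forall y1 y2, y1 \in s -> y2 \in s -> connect (rel_in e D) y1 y2.
Proof.
elim: s => [|x s IH] //= hs sD.
have Hx : forall y, y \in x :: s -> connect (rel_in e D) x y.
  move=> y; rewrite inE => /orP [/eqP ->|ys]; first exact: connect0.
  case: s IH hs sD ys => [//|x2 s] IH /= /andP [ex2 hs] sD ys.
  apply: (connect_trans (y := x2)).
    by apply: connect1; rewrite /rel_in /= ex2 !sD // !inE eqxx ?orbT.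
  apply: IH => //; first by move=> w hw; apply: sD; rewrite inE hw orbT.
  by rewrite inE eqxx.
move=> y1 y2 h1 h2; apply: connect_trans (Hx _ h2); rewrite conn_sym; exact: Hx.
Qed.

Lemma path_sub C x p : path (rel_in e C) x p -> {subset p <= C}.
Proof.
elim: p x => [|y p IH] x //= /andP [/and3P [_ _ yC] hp] w.
by rewrite inE => /orP [/eqP ->|]; [|exact: (IH _ hp w)].
Qed.

Lemma path_e C x p : path (rel_in e C) x p -> path e x p.
Proof. by apply: sub_path => a b /and3P []. Qed.

Lemma ear A a a' u u' : block e A -> a \in A -> a' \in A -> a != a' ->
  u \notin A -> e a u -> e a' u' -> connect (rel_in e (~: A)) u u' -> False.
Proof.
move=> bA aA a'A naa' uA eau ea'u' /connectP [p0 hp0 Eu'].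
case: (shortenP hp0) Eu' => p hp uq _ Eu'.
have qA : {subset u :: p <= ~: A}.
  move=> w; rewrite inE => /orP [/eqP ->|]; first by rewrite inE.
  by move=> wp; have := path_sub hp; apply.
have sq : sorted e (u :: p) by apply: path_e hp.
have u'q : u' \in u :: p by rewrite Eu'; exact: mem_last.
set Q := [set y in u :: p].
case/blockP: (bA) => _ nA mA.
have H : forall (Z : {set T}) z, Z \subset [set z] -> connected_in e ((A :|: Q) :\: Z).
  move=> Z z hZ.
  set D := (A :|: Q) :\: Z.
  have cAZ : connected_in e (A :\: Z).
    move: hZ; rewrite subset1 => /orP [/eqP ->|/eqP ->].
      by case/nocutP: nA => _; apply.
    by rewrite setD0; case/nocutP: nA.
  have sAD : A :\: Z \subset D by apply: setSD; apply: subsetUl.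
  have Hq : forall y, y \in u :: p -> y \notin Z ->
      exists2 c, c \in A :\: Z & connect (rel_in e D) y c.
    move=> y yq yZ.
    have edge1 : forall w c, c \in A -> c \notin Z -> w \in D -> e c w ->
        connect (rel_in e D) w c.
      move=> w c cA cZ wD ecw; have cD : c \in D by rewrite /D !inE cA (negbTE cZ).
      by apply: connect1; rewrite /rel_in /= e_sym ecw cD wD.
    have back : {subset u :: p <= D} -> a \notin Z ->
        exists2 c, c \in A :\: Z & connect (rel_in e D) y c.
      move=> qD aZ; exists a; first by rewrite inE aZ aA.
      apply: (connect_trans (y := u)); first by apply: (sorted_conn sq qD yq); rewrite inE eqxx.
      by apply: edge1 => //; apply: qD; rewrite inE eqxx.
    have forw : {subset u :: p <= D} -> a' \notin Z ->
        exists2 c, c \in A :\: Z & connect (rel_in e D) y c.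
      move=> qD aZ; exists a'; first by rewrite inE aZ a'A.
      apply: (connect_trans (y := u')); first exact: (sorted_conn sq qD yq).
      by apply: edge1 => //; apply: qD.
    have [EZ|EZ] : Z = set0 \/ Z = [set z].
      by move: hZ; rewrite subset1 => /orP [/eqP ->|/eqP ->]; [right|left].
      apply: back; last by rewrite EZ inE.
      by move=> w wq; rewrite /D EZ setD0 in_setU in_set wq orbT.
    case: (boolP (z \in u :: p)) => zq; last first.
      have qD : {subset u :: p <= D}.
        move=> w wq; rewrite /D in_setD in_setU in_set wq orbT andbT EZ inE.
        by apply: contraNneq zq => <-.
      case: (boolP (a \in Z)) => aZ; last exact: back.
      apply: forw => //; rewrite EZ inE; move: aZ; rewrite EZ inE => /eqP <-.
      by rewrite eq_sym.
    have zA : z \notin A by have := qA _ zq; rewrite inE.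
    have aZ : a \notin Z by rewrite EZ inE; apply: contraNneq zA => <-.
    have a'Z : a' \notin Z by rewrite EZ inE; apply: contraNneq zA => <-.
    have [q1 [q2 Eq]] : exists q1 q2, u :: p = q1 ++ z :: q2.
      by case/splitPr: zq => q1 q2; exists q1, q2.
    have uq' : uniq (q1 ++ z :: q2) by rewrite -Eq.
    rewrite cat_uniq /= in uq'; case/and4P: uq' => _ hq1 zq2 _.
    have zq1 : z \notin q1 by apply: contra hq1 => h; rewrite h.
    have sq' : sorted e (q1 ++ z :: q2) by rewrite -Eq.
    case: (cat_sorted2 sq') => sq1 /path_sorted sq2.
    have inD : forall w, w \in u :: p -> w != z -> w \in D.
      by move=> w wq wz; rewrite /D in_setD in_setU in_set wq orbT andbT EZ inE.
    move: (yq); rewrite Eq mem_cat inE => /or3P [yq1|/eqP eyz|yq2].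
    - exists a; first by rewrite inE aZ aA.
      clear hq1 yq sq'; case: q1 Eq yq1 zq1 sq1 => [//|h t] /= [<- Et] yq1 zq1 sq1.
      have sD1 : {subset u :: t <= D}.
        move=> w wq1; apply: inD; first by rewrite Et -cat_cons mem_cat wq1.
        by apply: contraNneq zq1 => <-.
      apply: (connect_trans (y := u)).
        by apply: (sorted_conn (s := u :: t) sq1 sD1 yq1); rewrite inE eqxx.
      apply: edge1 => //; apply: inD; first by rewrite inE eqxx.
      by apply: contraNneq zq1 => <-; rewrite inE eqxx.
    - by move: yZ; rewrite EZ inE eyz eqxx.
    - exists a'; first by rewrite inE a'Z a'A.
      have Eu2 : u' = last z q2.
        by rewrite Eu' -(last_cons z u p) Eq last_cat.
      clear hq1 yq sq'; case: q2 Eq yq2 zq2 sq2 Eu2 => [//|h t] Eq yq2 zq2 sq2 Eu2.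
      have u'q2 : u' \in h :: t by rewrite Eu2 /=; exact: mem_last.
      have sD2 : {subset h :: t <= D}.
        move=> w wq2; apply: inD; first by rewrite Eq mem_cat inE wq2 !orbT.
        by apply: contraNneq zq2 => <-.
      apply: (connect_trans (y := u')); first exact: (sorted_conn (s := h :: t) sq2 sD2 yq2 u'q2).
      apply: edge1 => //; apply: inD => //.
      by apply: contraNneq zq2 => <-.
  apply/connectedP.
  have Hy : forall y, y \in D -> exists2 c, c \in A :\: Z & connect (rel_in e D) y c.
    move=> y; rewrite !inE => /andP [yZ /orP [yA|yq]]; last exact: Hq.
    by exists y; rewrite ?inE ?yZ ?yA.
  move=> y1 y2 h1 h2; case: (Hy _ h1) => c1 c1A h1c; case: (Hy _ h2) => c2 c2A h2c.
  apply: connect_trans h1c _; apply: connect_trans _ _; last by rewrite conn_sym; exact: h2c.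
  by apply: conn_mono sAD _; move/connectedP: cAZ; apply.
have nAQ : nocut e (A :|: Q).
  apply/nocutP; split; first by rewrite -(setD0 (A :|: Q)); apply: (H _ u); rewrite sub0set.
  by move=> z; apply: (H _ z).
have := mA _ nAQ (subsetUl _ _) => E.
by move: uA; rewrite -E !inE eqxx orbT.
Qed.

Lemma exit_lem D A x y : connect (rel_in e D) x y -> x \in A -> y \notin A ->
  exists c, exists u, [&& c \in A, c \in D, u \in D, u \notin A, e c u &
                       connect (rel_in e (D :\: A)) u y].
Proof.
move=> /connectP [p hp Ey] xA yA.
suff [[] //|//] : (x \notin A /\ connect (rel_in e (D :\: A)) x y) \/
    exists c, exists u, [&& c \in A, c \in D, u \in D, u \notin A, e c u &
                       connect (rel_in e (D :\: A)) u y].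
  by rewrite xA.
elim: p x hp Ey {xA} => [|x' p IH] x /=.
  by move=> _ <-; left; split => //; apply: connect0.
case/andP => /and3P [exx' xD x'D] hp Ey.
case: (IH x' hp Ey) => [[x'A cx'y]|//]; last by right.
case: (boolP (x \in A)) => xA.
  by right; exists x, x'; rewrite xA xD x'D x'A exx'.
left; split => //; apply: connect_trans cx'y; apply: connect1.
by rewrite /rel_in /= exx' !inE xA x'A xD x'D.
Qed.

Lemma blocks_sep B1 B2 v b1 b2 : block e B1 -> block e B2 ->
  v \in B1 -> v \in B2 -> b1 \in B1 -> b2 \in B2 -> b1 != v -> b2 != v ->
  connect (rel_in e (~: [set v])) b1 b2 -> B1 = B2.
Proof.
move=> bB1 bB2 v1 v2 h1 h2 n1 n2 c12.
case: (boolP (1 < #|B1 :&: B2|)) => hI; first exact: block_eq2.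
exfalso.
have I1 : forall w, w \in B1 -> w \in B2 -> w = v.
  move=> w w1 w2; apply/eqP; apply: contraNT hI => nwv; apply/card_gt1P.
  by exists w, v; rewrite !inE w1 w2 v1 v2.
have b2B1 : b2 \notin B1 by apply: contra n2 => hb; rewrite (I1 _ hb h2).
case: (exit_lem c12 h1 b2B1) => c [u /and5P [cB1 cD uD uB1 /andP [ecu cub2]]].
case/blockP: (bB2) => _ /nocutP [/connectedP cB2 _] _.
have := cB2 _ _ v2 h2 => cvb2.
have vv : v \in [set v] by rewrite inE.
have b2v : b2 \notin [set v] by rewrite inE.
case: (exit_lem cvb2 vv b2v) => c' [u' /and5P [c'v _ u'B2 u'v /andP [ec'u' cu'b2]]].
move: c'v; rewrite inE => /eqP Ec'; subst c'.
have u'B1 : u' \notin B1 by apply: contra u'v => hu; rewrite inE (I1 _ hu u'B2).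
apply: (ear bB1 cB1 v1 _ uB1 ecu ec'u').
  by move: cD; rewrite !inE.
apply: (connect_trans (y := b2)).
  apply: conn_mono cub2; apply/subsetP => w; rewrite !inE.
  by case/andP.
rewrite conn_sym; apply: conn_mono cu'b2; apply/subsetP => w.
by rewrite !inE => /andP [wv wB2]; apply: contra wv => wB1; rewrite (I1 _ wB1 wB2).
Qed.

Lemma conn_close (r : rel T) (K : {set T}) x y :
  (forall a b, r a b -> a \in K -> b \in K) -> connect r x y -> x \in K -> y \in K.
Proof.
move=> H /connectP [p hp ->]; elim: p x hp => [|z p IH] x //= /andP [rxz hp] xK.
exact: IH hp (H _ _ rxz xK).
Qed.

Lemma comp_sub X C : component_of e X C -> C \subset X.
Proof. by case/and4P. Qed.

Lemma comp_conn X C w y : component_of e X C -> w \in C -> y \in C ->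
  connect (rel_in e X) w y.
Proof.
case/and4P => sCX _ /connectedP cC _ wC yC; apply: conn_mono sCX _; exact: cC.
Qed.

Lemma comp_closed X C w y : component_of e X C -> w \in C ->
  connect (rel_in e X) w y -> y \in C.
Proof.
case/and4P => _ _ _ /forall_inP cl wC cwy; apply: (conn_close _ cwy wC).
move=> a b /and3P [eab aX bX] aC; move/forall_inP: (cl a aC) => /(_ b bX).
by rewrite eab.
Qed.

Lemma comp_mk X w : w \in X -> component_of e X [set y | connect (rel_in e X) w y].
Proof.
move=> wX; set C := [set y | _].
have wC : w \in C by rewrite inE connect0.
have CX : C \subset X.
  apply/subsetP => y; rewrite inE => /conn_in_r [->|] //.
have cwC : forall y, y \in C -> connect (rel_in e C) w y.
  move=> y; rewrite inE => /connectP [p hp ->].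
  elim/last_ind: p hp => [|p z IH] /=; first by rewrite connect0.
  rewrite rcons_path last_rcons => /andP [hp /and3P [ez h1 h2]].
  apply: connect_trans (IH hp) _; apply: connect1; rewrite /rel_in /= ez.
  have l1 : last w p \in C by rewrite inE; apply/connectP; exists p.
  rewrite l1 /=; rewrite inE; apply/connectP; exists (rcons p z) => //.
    by rewrite rcons_path hp /rel_in /= ez h1 h2.
  by rewrite last_rcons.
apply/and4P; split => //.
- by apply/set0Pn; exists w.
- apply/connectedP => a b ha hb; apply: connect_trans (cwC _ hb).
  by rewrite conn_sym; apply: cwC.
- apply/forall_inP => a aC; apply/forall_inP => b bX; apply/implyP => eab.
  have aX : a \in X by apply: (subsetP CX).
  move: aC; rewrite !inE => cwa; apply: (connect_trans cwa); apply: connect1.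
  by rewrite /rel_in /= eab bX aX.
Qed.

Lemma comp_eq X C w : component_of e X C -> w \in C ->
  C = [set y | connect (rel_in e X) w y].
Proof.
move=> cC wC; apply/setP => y; rewrite inE; apply/idP/idP.
  exact: comp_conn.
exact: comp_closed.
Qed.

Lemma kappa_le1 v w1 w2 : kappa_del e v <= 1 -> w1 != v -> w2 != v ->
  connect (rel_in e (~: [set v])) w1 w2.
Proof.
move=> hk n1 n2.
have X1 : w1 \in ~: [set v] by rewrite !inE.
have X2 : w2 \in ~: [set v] by rewrite !inE.
have c1 := comp_mk X1; have c2 := comp_mk X2.
set C1 := [set y | _] in c1; set C2 := [set y | _] in c2.
have w2C : w2 \in C2 by rewrite inE connect0.
case: (eqVneq C1 C2) => [E|NE].
  by move: w2C; rewrite -E inE.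
exfalso; move: hk; apply/negP; rewrite -ltnNge; apply/card_gt1P.
by exists C1, C2; rewrite !inE c1 c2.
Qed.

Lemma kappa_le2 v P w1 w2 : kappa_del e v <= 2 -> component_of e (~: [set v]) P ->
  w1 != v -> w2 != v -> w1 \notin P -> w2 \notin P ->
  connect (rel_in e (~: [set v])) w1 w2.
Proof.
move=> hk cP n1 n2 p1 p2.
have X1 : w1 \in ~: [set v] by rewrite !inE.
have X2 : w2 \in ~: [set v] by rewrite !inE.
have c1 := comp_mk X1; have c2 := comp_mk X2.
set C1 := [set y | _] in c1; set C2 := [set y | _] in c2.
have w1C : w1 \in C1 by rewrite inE connect0.
have w2C : w2 \in C2 by rewrite inE connect0.
case: (eqVneq C1 C2) => [E|NE].
  by move: w2C; rewrite -E inE.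
exfalso; move: hk; apply/negP; rewrite -ltnNge; apply/card_gt2P.
exists P, C1, C2; split; first by rewrite !inE cP c1 c2.
split => //.
  by apply: contraNneq p1 => ->.
by apply: contraNneq p2 => <-.
Qed.

Lemma two_nb B x : nocut e B -> 2 < #|B| -> x \in B ->
  exists z1, exists z2, [&& z1 != z2, z1 \in B, z2 \in B, e x z1 & e x z2].
Proof.
case/nocutP => cB dB hB xB.
have : 0 < #|B :\ x| by move: (cardsD1 x B); rewrite xB; lia.
case/card_gt0P => y; rewrite !inE => /andP [yx yB].
have nxy : x != y by rewrite eq_sym.
case: (deg_nb cB xB yB nxy) => z1 /andP [exz1 z1B].
have z1x : z1 != x by apply: contraTneq exz1 => ->; rewrite e_irr.
have xB1 : x \in B :\ z1 by rewrite !inE eq_sym z1x xB.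
have : 0 < #|(B :\ z1) :\ x|.
  by move: (cardsD1 z1 B) (cardsD1 x (B :\ z1)); rewrite z1B xB1; lia.
case/card_gt0P => y'; rewrite in_setD1 => /andP [y'x y'B].
have nxy' : x != y' by rewrite eq_sym.
case: (deg_nb (dB z1) xB1 y'B nxy') => z2 /andP [exz2 z2B].
move: z2B; rewrite !inE => /andP [z2z1 z2B].
by exists z1, z2; rewrite eq_sym z2z1 z1B z2B exz1 exz2.
Qed.

Lemma pendant_small v P B : pendant e v P -> nocut e B -> B \subset v |: P ->
  #|B| <= 2.
Proof.
case/and3P => cP /and4P [P0 cnP /forall_inP dP /exists_inP [x1 x1P dx1]]
  /existsP [x0 /andP [_ /eqP Nv]] nB sB.
rewrite leqNgt; apply/negP => hB.
have vB : v \notin B.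
  apply/negP => vB; case: (two_nb nB hB vB) => z1 [z2 /and5P [nz z1B z2B e1 e2]].
  have inN : forall z, z \in B -> e v z -> z \in [set y in P | e v y].
    move=> z zB evz; rewrite inE evz andbT.
    move: (subsetP sB _ zB); rewrite !inE => /orP [/eqP Ez|//].
    by move: evz; rewrite Ez e_irr.
  move: (inN _ z1B e1) (inN _ z2B e2); rewrite Nv !inE => /eqP E1 /eqP E2.
  by rewrite E1 E2 eqxx in nz.
have BP : B \subset P.
  apply/subsetP => z zB; move: (subsetP sB _ zB); rewrite !inE => /orP [/eqP Ez|//].
  by move: vB; rewrite -Ez zB.
have clos : forall a b, rel_in e P a b -> a \in B -> b \in B.
  move=> a b /and3P [eab aP bP] aB.
  case: (two_nb nB hB aB) => z1 [z2 /and5P [nz z1B z2B e1 e2]].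
  apply: contraT => bnB.
  suff : 2 < #|[set y in P | e a y]| by rewrite ltnNge (dP a aP).
  apply/card_gt2P.
  exists z1, z2, b; rewrite !inE e1 e2 eab bP !(subsetP BP) //; split => //; split => //.
    by apply: contraNneq bnB => <-.
  by apply: contraNneq bnB => ->.
have PB : P \subset B.
  have : 0 < #|B| by apply: leq_trans hB.
  case/card_gt0P => b bB; apply/subsetP => p pP.
  apply: (conn_close clos _ bB); move/connectedP: cnP; apply => //.
  exact: (subsetP BP).
case: (two_nb nB hB (subsetP PB _ x1P)) => z1 [z2 /and5P [nz z1B z2B e1 e2]].
suff : 1 < #|[set y in P | e x1 y]| by rewrite ltnNge dx1.
by apply/card_gt1P; exists z1, z2; rewrite !inE e1 e2 !(subsetP BP).
Qed.

Lemma pendantP v P : pendant e v P ->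
  [/\ component_of e (~: [set v]) P, v \notin P &
      exists x0, [/\ x0 \in P, e v x0 & forall y, y \in P -> e v y -> y = x0]].
Proof.
case/and3P => cP _ /existsP [x0 /andP [/andP [x0P _] /eqP Nv]].
split => //.
  by apply/negP => /(subsetP (comp_sub cP)); rewrite !inE eqxx.
have x0N : x0 \in [set y in P | e v y] by rewrite Nv inE.
exists x0; split => //.
  by move: x0N; rewrite inE => /andP [].
move=> y yP evy; have : y \in [set y in P | e v y] by rewrite inE yP evy.
by rewrite Nv inE => /eqP.
Qed.

Lemma other_in B v : 1 < #|B| -> exists2 b, b \in B & b != v.
Proof.
case/card_gt1P => x [y [xB yB nxy]].
case: (eqVneq x v) => [exv|nxv]; last by exists x.
by exists y => //; rewrite -exv eq_sym.
Qed.

Hypothesis G_conn : connected_in e setT.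

Lemma blk_other B v w : block e B -> v \in B -> w != v -> exists2 b, b \in B & b != v.
Proof.
move=> bB vB nwv; have nvw : v != w by rewrite eq_sym.
case: (has_nb G_conn nvw) => z evz.
exact: other_in (block_card2 bB vB evz).
Qed.

Lemma pendant_pce v P B : pendant e v P -> block e B -> B \subset v |: P ->
  pendant_cut_edge e B.
Proof.
move=> pP bB sB; case/blockP: (bB) => B0 nB _.
have hB2 := pendant_small pP nB sB.
case/pendantP: (pP) => cP vP [x0 [x0P evx0 _]].
case/set0Pn: B0 => b bB'.
have : 1 < #|B|.
  case: (eqVneq b v) => [ebv|nbv].
    by apply: (block_card2 bB bB' (y := x0)); rewrite ebv.
  case: (has_nb G_conn nbv) => z ebz; exact: block_card2 bB bB' ebz.
case/card_gt1P => b1 [b2 [b1B b2B n12]].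
have eB : [set b1; b2] == B.
  rewrite eqEcard cards2 n12 hB2 andbT; apply/subsetP => z; rewrite !inE.
  by case/orP => /eqP ->.
case/nocutP: nB => cB _.
case: (deg_nb cB b1B b2B n12) => z /andP [eb1z zB].
have ez : z = b2.
  move: zB; rewrite -(eqP eB) !inE => /orP [/eqP Ez|/eqP //].
  by move: eb1z; rewrite Ez e_irr.
apply/existsP; exists v; apply/existsP; exists P; apply/existsP; exists b1;
  apply/existsP; exists b2.
by rewrite pP -ez eb1z !(subsetP sB) // ez // eq_sym eB.
Qed.

Lemma pend_meet v P B y : pendant e v P -> nocut e B -> y \in B -> y \in P ->
  B \subset v |: P.
Proof.
move=> pP /nocutP [_ dB] yB yP; case/pendantP: pP => cP vP _.
have yv : y != v by apply: contraNneq vP => <-.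
apply/subsetP => b bB; rewrite !inE; case: (eqVneq b v) => //= nbv.
apply: (comp_closed cP yP); apply: (conn_mono (C := B :\ v)).
  by apply/subsetP => z; rewrite !inE => /andP [].
by move/connectedP: (dB v); apply; rewrite !inE ?yv ?nbv.
Qed.

Section Forcing.
Variable S : {set T}.
Hypothesis S_conn : connected_in e S.
Hypothesis S_zf : zero_forcing e S.

Definition st k := iter k (force_step e) S.

Lemma st_mono k k' : k <= k' -> st k \subset st k'.
Proof.
move=> /subnK <-; elim: (k' - k) => [|n IH]; first by rewrite add0n.
by apply: subset_trans IH _; rewrite addSn /st iterS; apply: subsetUl.
Qed.

Definition forces k u w :=
  [&& u \in st k, e u w, w \notin st k &
      [forall y, (e u y && (y \notin st k)) ==> (y == w)]].

Lemma forces_ex w : w \notin S -> exists p : 'I_#|T| * T, forces p.1 p.2 w.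
Proof.
move=> wS.
have wT : w \in st #|T| by rewrite /st -/(zf_closure e S) (eqP S_zf) inE.
have : exists k, [/\ k < #|T|, w \notin st k & w \in st k.+1].
  elim: #|T| wT => [|n IH] wn; first by rewrite /st /= in wn; rewrite wn in wS.
  case: (boolP (w \in st n)) => h; first by case: (IH h) => k [k1 k2 k3]; exists k; split => //; lia.
  by exists n; split.
case=> k [kT k1 k2].
move: k2; rewrite /st iterS -/(st k) /force_step in_setU (negbTE k1) /= inE.
case/exists_inP => u uk /andP [/andP [euw _] H].
by exists (Ordinal kT, u); rewrite /forces /= uk euw k1 H.
Qed.

Definition gp w := [pick p : 'I_#|T| * T | forces p.1 p.2 w].
Definition f w := if gp w is Some p then p.2 else w.
Definition kf w := if gp w is Some p then val p.1 else 0.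

Lemma forces_f w : w \notin S -> forces (kf w) (f w) w.
Proof.
move=> wS; rewrite /f /kf /gp; case: pickP => [p //|none].
by case: (forces_ex wS) => p hp; rewrite none in hp.
Qed.

Lemma f_edge w : w \notin S -> e (f w) w.
Proof. by move/forces_f => /and4P []. Qed.

Definition CB B := [set w in B | (w \notin S) && (f w \notin B)].

Lemma bigmin_le (s : seq T) (F : T -> nat) d x :
  x \in s -> \big[minn/d]_(y <- s) F y <= F x.
Proof.
elim: s => [//|y s IH]; rewrite inE big_cons => /orP [/eqP ->|xs].
  exact: geq_minl.
exact: leq_trans (geq_minr _ _) (IH xs).
Qed.

Lemma mindeg_le B x : x \in B -> mindeg e B <= deg_in e B x.
Proof. by move=> xB; rewrite /mindeg -big_filter; apply: bigmin_le; rewrite mem_filter xB mem_index_enum. Qed.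

Lemma card_U_le (A1 A2 : {set T}) : #|A1 :|: A2| <= #|A1| + #|A2|.
Proof. by rewrite cardsU leq_subr. Qed.

Lemma block_bound B : B != set0 -> mindeg e B <= #|S :&: B| + #|CB B|.
Proof.
move=> B0.
set W := [set w in B | (w \notin S) && (f w \in B)].
case: (set_0Vmem W) => [W0|[w wW]].
  case/set0Pn: B0 => x xB.
  apply: leq_trans (mindeg_le xB) _.
  apply: leq_trans (subset_leq_card (_ : [set y in B | e x y] \subset B)) _.
    by apply/subsetP => y; rewrite inE => /andP [].
  apply: leq_trans (card_U_le _ _); apply: subset_leq_card; apply/subsetP => y yB.
  rewrite !inE yB andbT; case: (boolP (y \in S)) => //= yS.
  apply: contraT; rewrite negbK => fy.
  have yW : y \in W by rewrite !inE yB yS fy.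
  by rewrite W0 inE in yW.
have exk : exists k, [exists w in W, kf w == k] by exists (kf w); apply/exists_inP; exists w.
case: (ex_minnP exk) => k0 /exists_inP [w0 w0W /eqP Ek0] mink.
move: (w0W); rewrite !inE => /and3P [w0B w0S fw0B].
have := forces_f w0S; rewrite Ek0 => /and4P [uk euw w0k /forallP Fu].
set u := f w0 in uk euw fw0B Fu.
have sub1 : B :&: st k0 \subset (S :&: B) :|: CB B.
  apply/subsetP => y; rewrite !inE => /andP [yB yk]; rewrite yB /= andbT.
  case: (boolP (y \in S)) => //= yS; apply/negP => fyB.
  have yW : y \in W by rewrite !inE yB yS fyB.
  have le : k0 <= kf y by apply: mink; apply/exists_inP; exists y.
  have := forces_f yS => /and4P [_ _ yk' _].
  by move: yk' => /negP; apply; apply: (subsetP (st_mono le)).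
set N := [set y in B | e u y].
have w0N : w0 \in N by rewrite inE w0B euw.
have uN : u \notin N by rewrite inE e_irr andbF.
have sub2 : u |: (N :\ w0) \subset B :&: st k0.
  apply/subsetP => y; rewrite !inE => /orP [/eqP ->|/and3P [yw0 yB euy]].
    by rewrite fw0B uk.
  rewrite yB /=; apply: contraT => yk.
  by move: (Fu y); rewrite euy yk /= (negbTE yw0).
apply: leq_trans (mindeg_le fw0B) _.
rewrite /deg_in -/N (cardsD1 w0 N) w0N.
have : #|u |: (N :\ w0)| = 1 + #|N :\ w0|.
  by rewrite cardsU1 inE negb_and uN orbT.
move=> <-; apply: leq_trans (subset_leq_card sub2) _.
by apply: leq_trans (subset_leq_card sub1) (card_U_le _ _).
Qed.


Definition av v := \sum_(B in blocksB e) ((v \in S :&: B) + (v \in CB B)).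
Definition RR := R2 e :|: R3 e.
Definition bv v := (v \in S) + (if v \in RR then mu e v - 1 else 0).

Lemma sum_ind (A : {set {set T}}) (P : pred {set T}) :
  \sum_(B in A) (P B : nat) = #|[set B in A | P B]|.
Proof.
rewrite -sum1_card big_mkcond [RHS]big_mkcond; apply: eq_bigr => B _ /=.
by rewrite inE; case: (B \in A); case: (P B).
Qed.

Lemma a_S v : v \in S -> av v = #|[set B in blocksB e | v \in B]|.
Proof.
move=> vS; rewrite /av -sum_ind; apply: eq_bigr => B _.
by rewrite !inE vS /= andbF addn0.
Qed.

Lemma a_nS v : v \notin S -> av v = #|[set B in blocksB e | (v \in B) && (f v \notin B)]|.
Proof.
move=> vS; rewrite /av -sum_ind; apply: eq_bigr => B _.
by rewrite !inE (negbTE vS) /= add0n.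
Qed.

Lemma mu_pos v : 0 < mu e v.
Proof. by case: (block_of v) => B bB vB; apply/card_gt0P; exists B; rewrite inE bB vB. Qed.

Lemma muB_le1 v : (forall B1 B2, B1 \in blocksB e -> B2 \in blocksB e ->
  v \in B1 -> v \in B2 -> B1 = B2) -> #|[set B in blocksB e | v \in B]| <= 1.
Proof.
move=> H; rewrite leqNgt; apply/negP => /card_gt1P [B1 [B2 []]].
rewrite !inE => /andP [h1 v1] /andP [h2 v2].
have h1' : B1 \in blocksB e by rewrite inE.
have h2' : B2 \in blocksB e by rewrite inE.
by rewrite (H _ _ h1' h2' v1 v2) eqxx.
Qed.

Lemma reach v P k y : component_of e (~: [set v]) P -> v \notin st k -> y \in P ->
  y \in st k -> exists2 s, s \in S & s \in P.
Proof.
move=> cP; elim: k y => [|k IH] y vk yP yk; first by exists y.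
have vk' : v \notin st k by apply: contra vk; apply/subsetP; apply: st_mono.
move: yk; rewrite /st iterS -/(st k) /force_step in_setU => /orP [yk|]; first exact: IH yk.
rewrite inE => /exists_inP [u uk /andP [/andP [euy _] _]].
have uv : u != v by apply: contraNneq vk' => <-.
have yv : y \in ~: [set v] by apply: (subsetP (comp_sub cP)).
apply: (IH u) => //; apply: (comp_closed cP yP); apply: connect1.
by rewrite /rel_in /= e_sym euy yv !inE.
Qed.

Lemma S_in_P v P s : component_of e (~: [set v]) P -> v \notin S -> s \in S ->
  s \in P -> S \subset P.
Proof.
move=> cP vS sS sP; apply/subsetP => s' s'S.
apply: (comp_closed cP sP); apply: (conn_mono (C := S)).
  by apply/subsetP => z zS; rewrite !inE; apply: contraNneq vS => <-.
by move/connectedP: S_conn; apply.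
Qed.

Lemma inB B : (B \in blocksB e) = block e B && ~~ pendant_cut_edge e B.
Proof. by rewrite inE. Qed.

Lemma vertex_case v : bv v < av v ->
  [/\ v \notin S, av v <= 1, bv v = 0 &
   exists P, [/\ pendant e v P, S \subset P, (exists2 s, s \in S & s \in P) &
                exists2 B, B \in blocksB e & v \in B]].
Proof.
move=> hab.
have fB0 : v \notin S -> exists2 B0, block e B0 & (f v \in B0) && (v \in B0).
  by move=> vS; apply: block_edge; apply: f_edge.
have subMu : forall (Q : pred {set T}), #|[set B in blocksB e | (v \in B) && Q B]| <=
    #|[set B in blocksB e | v \in B]|.
  move=> Q; apply: subset_leq_card; apply/subsetP => B; rewrite !inE.
  by case/andP => -> /andP [-> _].
case: (boolP (v \in RR)) => vR.
  exfalso; move: hab; apply/negP; rewrite -leqNgt /bv vR.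
  case: (boolP (v \in S)) => vS.
    rewrite a_S // add1n subn1 prednK ?mu_pos //; apply: subset_leq_card.
    by apply/subsetP => B; rewrite !inE => /andP [/andP [-> _] ->].
  rewrite a_nS // add0n; case: (fB0 vS) => B0 bB0 /andP [fB0' vB0].
  have hB0 : B0 \in [set B | block e B & v \in B] by rewrite inE bB0 vB0.
  rewrite /mu (cardsD1 B0) hB0 add1n subn1 /=.
  apply: subset_leq_card; apply/subsetP => B; rewrite !inE.
  case/andP => /andP [-> _] /andP [-> fvB]; rewrite andbT andbT.
  by apply: contraNneq fvB => ->.
have bv0 : bv v = (v \in S) by rewrite /bv (negbTE vR) addn0.
move: vR; rewrite /RR !inE negb_or negb_and -ltnNge => /andP [/orP hk k3].
have pairB : forall B1 B2, B1 \in blocksB e -> B2 \in blocksB e -> v \in B1 ->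
  v \in B2 -> (exists b1 b2, [/\ b1 \in B1, b2 \in B2, b1 != v, b2 != v &
                 connect (rel_in e (~: [set v])) b1 b2]) -> B1 = B2.
  move=> B1 B2 h1 h2 v1 v2 [b1 [b2 [b1B b2B n1 n2 c]]].
  move: h1 h2; rewrite !inB => /andP [k1 _] /andP [k2 _].
  exact: (blocks_sep k1 k2 v1 v2 b1B b2B n1 n2 c).
case: (boolP (kappa_del e v <= 1)) => k1.
  have pair : forall B1 B2, block e B1 -> block e B2 -> v \in B1 -> v \in B2 -> B1 = B2.
    move=> B1 B2 b1 b2 v1 v2.
    case: (boolP [exists w, w != v]) => [/existsP [w nwv]|none].
      case: (blk_other b1 v1 nwv) => c1 c1B n1; case: (blk_other b2 v2 nwv) => c2 c2B n2.
      exact: (blocks_sep b1 b2 v1 v2 c1B c2B n1 n2 (kappa_le1 k1 n1 n2)).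
    have Ez : forall z, z = v.
      by move=> z; apply/eqP; apply: contraNT none => nz; apply/existsP; exists z.
    by apply/setP => z; rewrite (Ez z) v1 v2.
  exfalso; move: hab; apply/negP; rewrite -leqNgt bv0.
  case: (boolP (v \in S)) => vS.
    rewrite a_S //; apply: muB_le1 => B1 B2; rewrite !inB => /andP [? _] /andP [? _].
    exact: pair.
  rewrite a_nS //; case: (fB0 vS) => B0 bB0 /andP [fB0' vB0].
  rewrite leqn0 cards_eq0; apply/eqP/setP => B; rewrite !inE.
  apply/negP => /andP [/andP [bB _] /andP [vB fvB]].
  by move: fvB; rewrite (pair _ _ bB bB0 vB vB0) fB0'.
have k2 : kappa_del e v = 2.
  by apply/eqP; rewrite eqn_leq -ltnS k3 ltnNge k1.
case: hk => [|np]; first by rewrite k2.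
have [P pP] : exists P, pendant e v P.
  have : 0 < npend e v by rewrite lt0n.
  by case/card_gt0P => P; rewrite inE => hP; exists P.
case/pendantP: (pP) => cP vP [x0 [x0P evx0 _]].
have Q : forall B, B \in blocksB e -> v \in B -> exists2 b, b \in B & (b != v) && (b \notin P).
  move=> B; rewrite inB => /andP [bB npc] vB.
  case: (boolP (B \subset v |: P)) => sB.
    by rewrite (pendant_pce pP bB sB) in npc.
  case/subsetPn: sB => b bB0; rewrite !inE negb_or => hb; by exists b.
have k2' : kappa_del e v <= 2 by rewrite k2.
have pairQ : forall B1 B2, B1 \in blocksB e -> B2 \in blocksB e -> v \in B1 ->
    v \in B2 -> B1 = B2.
  move=> B1 B2 h1 h2 v1 v2; apply: pairB => //.
  case: (Q _ h1 v1) => b1 b1B /andP [n1 p1]; case: (Q _ h2 v2) => b2 b2B /andP [n2 p2].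
  by exists b1, b2; split => //; apply: kappa_le2 cP n1 n2 p1 p2.
have muB1 := muB_le1 pairQ.
case: (boolP (v \in S)) => vS.
  by exfalso; move: hab; apply/negP; rewrite -leqNgt bv0 vS a_S.
have av1 : av v <= 1 by rewrite a_nS //; apply: leq_trans (subMu _) muB1.
case: (fB0 vS) => B0 bB0 /andP [fB0' vB0].
case: (boolP (f v \in P)) => fP; last first.
  exfalso; move: hab; apply/negP; rewrite -leqNgt bv0 (negbTE vS) a_nS //.
  rewrite leqn0 cards_eq0; apply/eqP/setP => B; rewrite inE [RHS]inE.
  apply/negP => /andP [hB /andP [vB fvB]].
  case: (Q _ hB vB) => b bB /andP [nb pb].
  have nf : f v != v by apply: contraTneq (f_edge vS) => ->; rewrite e_irr.
  have c := kappa_le2 k2' cP nb nf pb fP.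
  move: hB; rewrite inB => /andP [bB' _].
  by move: fvB; rewrite (blocks_sep bB' bB0 vB vB0 bB fB0' nb nf c) fB0'.
have fk := forces_f vS; case/and4P: fk => fk _ vk _.
case: (reach cP vk fP fk) => s sS sP.
split => //; first by rewrite bv0 (negbTE vS).
exists P; split => //; first exact: (S_in_P cP vS sS sP); first by exists s.
move: hab; rewrite bv0 (negbTE vS) a_nS // => /card_gt0P [B]; rewrite inE.
by case/andP => hB /andP [vB _]; exists B.
Qed.

Lemma a_zero v P s : pendant e v P -> S \subset P -> s \in S -> av s = 0.
Proof.
move=> pP SP sS; rewrite a_S //; apply/eqP; rewrite cards_eq0; apply/eqP/setP => B.
rewrite [RHS]inE; apply/negP; rewrite inE inB => /andP [/andP [bB npc] sB].
case/blockP: (bB) => _ nB _.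
have sBP := pend_meet pP nB sB (subsetP SP _ sS).
by rewrite (pendant_pce pP bB sBP) in npc.
Qed.

Lemma bad_uniq v1 v2 : bv v1 < av v1 -> bv v2 < av v2 -> v1 = v2.
Proof.
move=> /vertex_case [_ _ _ [P1 [p1 SP1 [s sS sP1] [B1 hB1 vB1]]]].
move=> /vertex_case [_ _ _ [P2 [p2 SP2 _ [B2 hB2 vB2]]]].
apply/eqP; apply: contraT => n12.
have sP2 : s \in P2 by apply: (subsetP SP2).
move: hB1 hB2; rewrite !inB => /andP [bB1 npc1] /andP [bB2 npc2].
case/blockP: (bB1) => _ nB1 _; case/blockP: (bB2) => _ nB2 _.
have v1P2 : v1 \notin P2.
  apply/negP => vP; have := pend_meet p2 nB1 vB1 vP => sB.
  by rewrite (pendant_pce p2 bB1 sB) in npc1.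
have v2P1 : v2 \notin P1.
  apply/negP => vP; have := pend_meet p1 nB2 vB2 vP => sB.
  by rewrite (pendant_pce p1 bB2 sB) in npc2.
case/pendantP: (p1) => c1 _ _; case/pendantP: (p2) => c2 _ [x2 [x2P ex2 _]].
have sub : forall Pa Pb va vb, component_of e (~: [set va]) Pa ->
    component_of e (~: [set vb]) Pb -> vb \notin Pa -> s \in Pa -> s \in Pb ->
    Pa \subset Pb.
  move=> Pa Pb va vb ca cb vbPa sa sb; apply/subsetP => y ya.
  apply: (comp_closed cb sb); apply: (conn_mono (C := Pa)).
    by apply/subsetP => z za; rewrite !inE; apply: contraNneq vbPa => <-.
  by case/and4P: ca => _ _ /connectedP cc _; apply: cc.
have EP : P1 = P2 by apply/eqP; rewrite eqEsubset (sub _ _ _ _ c1 c2) ?(sub _ _ _ _ c2 c1).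
have x2P1 : x2 \in P1 by rewrite EP.
suff : v2 \in P1 by rewrite (negbTE v2P1).
apply: (comp_closed c1 x2P1); apply: connect1.
rewrite /rel_in /= e_sym ex2 (subsetP (comp_sub c1) _ x2P1) /= !inE.
by rewrite eq_sym.
Qed.

Lemma sum_ab : \sum_v av v <= \sum_v bv v.
Proof.
case: (boolP [exists v, bv v < av v]) => [/existsP [v0 h0]|none]; last first.
  apply: leq_sum => v _; rewrite leqNgt; apply: contra none => h.
  by apply/existsP; exists v.
have [v0S a1 b0 [P [pP SP [s sS sP] _]]] := vertex_case h0.
have ns : s != v0 by apply: contraNneq v0S => <-.
rewrite (bigD1 v0) // [X in _ <= X](bigD1 v0) //=.
rewrite (bigD1 s) ?ns //= [in X in _ <= X](bigD1 s) ?ns //=.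
rewrite (a_zero pP SP sS) b0 add0n addnA.
apply: leq_add.
  by rewrite /bv sS add1n; apply: leq_trans a1 _.
apply: leq_sum => v /andP [nv0 _]; rewrite leqNgt; apply/negP => h.
by move: nv0; rewrite (bad_uniq h h0) eqxx.
Qed.

Lemma card_sum (A : {set T}) : #|A| = \sum_v (v \in A).
Proof.
rewrite -sum1_card big_mkcond /=; apply: eq_bigr => v _.
by case: (v \in A).
Qed.

Lemma main_nat : \sum_(B in blocksB e) mindeg e B <= #|S| + \sum_(p in RR) (mu e p - 1).
Proof.
apply: (leq_trans (n := \sum_(B in blocksB e) (#|S :&: B| + #|CB B|))).
  apply: leq_sum => B; rewrite inB => /andP [bB _]; case/blockP: bB => B0 _ _.
  exact: block_bound.
have -> : \sum_(B in blocksB e) (#|S :&: B| + #|CB B|) = \sum_v av v.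
  rewrite /av exchange_big /=; apply: eq_bigr => B _.
  by rewrite !card_sum -big_split.
have -> : #|S| + \sum_(p in RR) (mu e p - 1) = \sum_v bv v.
  by rewrite /bv big_split /= -card_sum big_mkcond.
exact: sum_ab.
Qed.

End Forcing.

Lemma zf_setT : zero_forcing e setT.
Proof.
rewrite /zero_forcing /zf_closure; apply/eqP; elim: #|T| => //= n ->.
by apply/eqP; rewrite eqEsubset subsetT subsetUl.
Qed.

End Aux.

Import GRing.Theory Num.Theory.
Local Open Scope ring_scope.

Theorem corollary1 (T : finType) (e : rel T)
  (e_sym : symmetric e) (e_irr : irreflexive e)
  (G_conn : connected_in e [set: T]) :
  ((\sum_(B in blocksB e) mindeg e B)%N%:Z
     - (\sum_(p in R2 e :|: R3 e) (mu e p - 1))%N%:Z <= (Zc e)%:Z :> int).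
Proof.
have key : (\sum_(B in blocksB e) mindeg e B <= Zc e + \sum_(p in R2 e :|: R3 e) (mu e p - 1))%N.
  rewrite /Zc; apply: (big_ind (fun m => \sum_(B in blocksB e) mindeg e B <= m + _)%N).
  - rewrite -{1}(cardsT T).
    exact: (main_nat e_sym e_irr G_conn G_conn (zf_setT e)).
  - by move=> x y hx hy; rewrite addn_minl leq_min hx hy.
  - move=> S; rewrite inE => /andP [cS zS].
    exact: (main_nat e_sym e_irr G_conn cS zS).
move: key.
move: (\sum_(B in blocksB e) mindeg e B)%N (Zc e) (\sum_(p in R2 e :|: R3 e) (mu e p - 1))%N.
move=> a b c h; lia.
Qed.
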